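(* The inverse hull $IH(C)$ of a Garside monoid $C$ is a bisimple $F$-inverse monoid.
   Context: A Garside monoid is a cancellative monoid $C$ whose only unit is the identity, such that any two elements have a least common left multiple, a least common right multiple, a greatest common left divisor and a greatest common right divisor (i.e. $C$ is a lattice under both left and right divisibility), and which satisfies the standard finiteness conditions (every element has a bound on the lengths of its factorizations into non-identity elements, and there is a Garside element whose left and right divisors coincide, are finite in number and generate $C$). For a right cancellative monoid $C$ and $a\in C$, $\rho_a:C\to C$, $x\mapsto xa$, is a partial bijection of $C$; $IH(C)$ is the inverse submonoid of the symmetric inverse monoid on $C$ generated by all $\rho_a$. An inverse monoid is bisimple if all its elements are $\mathscr{D}$-related, and $F$-inverse if every element lies beneath a unique maximal element in the natural partial order ($a\le b$ iff $a=eb$ for an idempotent $e$). *)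

(* Defs.v *)
From Stdlib Require Import List.
Import ListNotations.

Section Monoid.
Context {C : Type} (mul : C -> C -> C) (one : C).

Definition is_monoid : Prop :=
  (forall x y z, mul x (mul y z) = mul (mul x y) z) /\
  (forall x, mul one x = x) /\ (forall x, mul x one = x).

Definition cancellative : Prop :=
  (forall a x y, mul a x = mul a y -> x = y) /\
  (forall a x y, mul x a = mul y a -> x = y).

Definition trivial_units : Prop :=
  forall x y, mul x y = one -> mul y x = one -> x = one.

Definition ldiv (a b : C) : Prop := exists c, mul a c = b.
Definition rdiv (a b : C) : Prop := exists c, mul c a = b.

Definition is_lcrm (a b m : C) : Prop :=
  ldiv a m /\ ldiv b m /\ forall n, ldiv a n -> ldiv b n -> ldiv m n.
Definition is_gcld (a b d : C) : Prop :=
  ldiv d a /\ ldiv d b /\ forall e, ldiv e a -> ldiv e b -> ldiv e d.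
Definition is_lclm (a b m : C) : Prop :=
  rdiv a m /\ rdiv b m /\ forall n, rdiv a n -> rdiv b n -> rdiv m n.
Definition is_gcrd (a b d : C) : Prop :=
  rdiv d a /\ rdiv d b /\ forall e, rdiv e a -> rdiv e b -> rdiv e d.

Definition lattice_conditions : Prop :=
  forall a b, (exists m, is_lclm a b m) /\ (exists m, is_lcrm a b m) /\
              (exists d, is_gcld a b d) /\ (exists d, is_gcrd a b d).

Definition prod_list (l : list C) : C := fold_right mul one l.

Definition bounded_factorizations : Prop :=
  forall x, exists N, forall l : list C,
    (forall y, In y l -> y <> one) -> prod_list l = x -> length l <= N.

Definition is_garside_element (D : C) : Prop :=
  (forall a, ldiv a D <-> rdiv a D) /\
  (exists l : list C, forall a, ldiv a D -> In a l) /\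
  (forall x, exists l : list C, (forall y, In y l -> ldiv y D) /\ prod_list l = x).

Definition garside_monoid : Prop :=
  is_monoid /\ cancellative /\ trivial_units /\ lattice_conditions /\
  bounded_factorizations /\ exists D, is_garside_element D.

(* Partial bijections of C are represented as (functional, injective)
   relations; x rho_a y  iff  y = x a. *)
Definition rho (a : C) : C -> C -> Prop := fun x y => y = mul x a.

End Monoid.

Definition rid {C : Type} : C -> C -> Prop := fun x y => x = y.
Definition rcomp {C : Type} (f g : C -> C -> Prop) : C -> C -> Prop :=
  fun x y => exists z, f x z /\ g z y.
Definition rinv {C : Type} (f : C -> C -> Prop) : C -> C -> Prop :=
  fun x y => f y x.

(* IH(C): the inverse submonoid of the symmetric inverse monoid on C
   generated by all rho_a. *)
Inductive in_IH {C : Type} (mul : C -> C -> C) : (C -> C -> Prop) -> Prop :=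
| IH_id : in_IH mul rid
| IH_rho a : in_IH mul (rho mul a)
| IH_comp f g : in_IH mul f -> in_IH mul g -> in_IH mul (rcomp f g)
| IH_inv f : in_IH mul f -> in_IH mul (rinv f).

Section InverseMonoid.
Context {T : Type} (S : T -> Prop) (op : T -> T -> T).

Definition inverse_monoid : Prop :=
  forall a, S a -> exists! b, S b /\ op (op a b) a = a /\ op (op b a) b = b.

Definition green_L (a b : T) : Prop :=
  exists s t, S s /\ S t /\ a = op s b /\ b = op t a.
Definition green_R (a b : T) : Prop :=
  exists s t, S s /\ S t /\ a = op b s /\ b = op a t.
Definition green_D (a b : T) : Prop :=
  exists c, S c /\ green_L a c /\ green_R c b.

Definition bisimple : Prop := forall a b, S a -> S b -> green_D a b.

Definition idempotent (e : T) : Prop := S e /\ op e e = e.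
Definition nat_le (a b : T) : Prop := exists e, idempotent e /\ a = op e b.
Definition maximal (m : T) : Prop := S m /\ forall n, S n -> nat_le m n -> n = m.

Definition F_inverse : Prop :=
  forall a, S a -> exists! m, maximal m /\ nat_le a m.
End InverseMonoid.

(* Main.v *)
Require Import Defs.
From Stdlib Require Import FunctionalExtensionality PropExtensionality List.

Lemma rel_ext {C : Type} (f g : C -> C -> Prop) :
  (forall x y, f x y <-> g x y) -> f = g.
Proof.
  intro H. apply functional_extensionality; intro x.
  apply functional_extensionality; intro y. apply propositional_extensionality. apply H.
Qed.

Definition PB {C : Type} (f : C -> C -> Prop) : Prop :=
  (forall x y y', f x y -> f x y' -> y = y') /\ (forall x x' y, f x y -> f x' y -> x = x').

Lemma IH_PB {C : Type} (mul : C -> C -> C)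
  (rc : forall a x y, mul x a = mul y a -> x = y) f :
  in_IH mul f -> PB f.
Proof.
  induction 1 as [| a | f g _ [F1 F2] _ [G1 G2] | f _ [F1 F2]]; unfold PB, rid, rho, rcomp, rinv in *.
  - split; intros; subst; reflexivity.
  - split; intros; subst; auto. eapply rc; eauto.
  - split.
    + intros x y y' [z [H1 H2]] [z' [H3 H4]].
      assert (z = z') by eauto. subst. eauto.
    + intros x x' y [z [H1 H2]] [z' [H3 H4]].
      assert (z = z') by eauto. subst. eauto.
  - split; eauto.
Qed.

Definition NF {C : Type} (mul : C -> C -> C) (a b : C) : C -> C -> Prop :=
  fun x y => exists z, x = mul z a /\ y = mul z b.

Lemma NF_in {C : Type} (mul : C -> C -> C) (one : C)
  (lid : forall x, mul one x = x) a b : in_IH mul (NF mul a b).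
Proof.
  replace (NF mul a b) with (rcomp (rinv (rho mul a)) (rho mul b)).
  - apply IH_comp; [apply IH_inv|]; apply IH_rho.
  - apply rel_ext; intros x y; unfold rcomp, rinv, rho, NF; split.
    + intros [z [H1 H2]]; eauto.
    + intros [z [H1 H2]]; exists z; split; auto.
Qed.

Lemma NF_chain {C : Type} (mul : C -> C -> C)
  (rc : forall a x y, mul x a = mul y a -> x = y) a b c :
  rcomp (NF mul a b) (NF mul b c) = NF mul a c.
Proof.
  apply rel_ext; intros x y; unfold rcomp, NF; split.
  - intros [w [[z [H1 H2]] [z' [H3 H4]]]]. subst.
    apply rc in H3. subst. eauto.
  - intros [z [H1 H2]]. exists (mul z b). split; eauto.
Qed.

Lemma NF_comp {C : Type} (mul : C -> C -> C) (one : C)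
  (assoc : forall x y z, mul x (mul y z) = mul (mul x y) z)
  (rc : forall a x y, mul x a = mul y a -> x = y)
  (lat : lattice_conditions mul) a b c d :
  exists p q, rcomp (NF mul a b) (NF mul c d) = NF mul p q.
Proof.
  destruct (lat b c) as [[m [Hu1 [Hv1 Hm]]] _]. destruct Hu1 as [u Hu]. destruct Hv1 as [v Hv].
  exists (mul u a), (mul v d).
  apply rel_ext; intros x y; unfold rcomp, NF; split.
  - intros [w [[z [H1 H2]] [z' [H3 H4]]]]. subst x y w.
    destruct (Hm (mul z b)) as [k Hk].
    + exists z; reflexivity.
    + exists z'; auto.
    + rewrite <- Hu, assoc in Hk. apply rc in Hk.
      rewrite <- Hk, <- assoc, Hu, <- Hv, assoc in H3. apply rc in H3. subst z z'.
      exists k. rewrite !assoc. auto.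
  - intros [k [H1 H2]]. subst x y. exists (mul k m). split.
    + exists (mul k u). rewrite <- Hu, !assoc. auto.
    + exists (mul k v). rewrite <- Hv, !assoc. auto.
Qed.

Lemma IH_NF {C : Type} (mul : C -> C -> C) (one : C)
  (assoc : forall x y z, mul x (mul y z) = mul (mul x y) z)
  (lid : forall x, mul one x = x) (rone : forall x, mul x one = x)
  (rc : forall a x y, mul x a = mul y a -> x = y)
  (lat : lattice_conditions mul) f :
  in_IH mul f -> exists a b, f = NF mul a b.
Proof.
  induction 1 as [| a | f g _ [a [b ->]] _ [c [d ->]] | f _ [a [b ->]]].
  - exists one, one. apply rel_ext; intros x y; unfold rid, NF; split.
    + intros ->. exists y. rewrite rone. auto.
    + intros [z [H1 H2]]. congruence.
  - exists one, a. apply rel_ext; intros x y; unfold rho, NF; split.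
    + intros ->. exists x. rewrite rone. auto.
    + intros [z [H1 H2]]. subst. rewrite rone. auto.
  - eapply NF_comp; eauto.
  - exists b, a. apply rel_ext; intros x y; unfold rinv, NF; split;
      intros [z [H1 H2]]; eauto.
Qed.

Lemma inv_unique {C : Type} (a c : C -> C -> Prop) :
  PB a -> PB c -> rcomp (rcomp a c) a = a -> rcomp (rcomp c a) c = c ->
  c = rinv a.
Proof.
  intros [A1 A2] [C1 C2] H1 H2.
  assert (K : forall p q, a p q -> c q p).
  { intros p q Hpq. rewrite <- H1 in Hpq.
    destruct Hpq as [q' [[p' [Ha Hc]] Ha2]].
    assert (p' = q) as E1.
    { apply (A1 p); auto. rewrite <- H1. exists q'; split; [exists p'; auto|]. auto. }
    subst p'. assert (q' = p) by eauto. subst q'. auto. }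
  apply rel_ext; intros x y; unfold rinv; split.
  - intros Hc. rewrite <- H2 in Hc. destruct Hc as [q' [[p [Hxp Hpq]] Hq'y]].
    pose proof (K _ _ Hpq) as Hqp. assert (q' = x) by eauto. subst q'.
    rewrite <- H1 in Hpq. destruct Hpq as [r [[p' [Hpp' Hp'r]] Hrq]].
    assert (p' = x) by eauto. subst p'. assert (r = y) by eauto. subst r. auto.
  - intros Ha. apply K; auto.
Qed.

Lemma inverse_part {C : Type} (mul : C -> C -> C)
  (rc : forall a x y, mul x a = mul y a -> x = y) :
  inverse_monoid (in_IH mul) (@rcomp C).
Proof.
  intros a Ha. pose proof (IH_PB mul rc a Ha) as [A1 A2].
  assert (E1 : rcomp (rcomp a (rinv a)) a = a).
  { apply rel_ext; intros x y; unfold rcomp, rinv; split.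
    - intros [z [[w [H1 H2]] H3]]. assert (x = z) by eauto. subst; auto.
    - intros H. exists x; split; [exists y; auto|auto]. }
  assert (E2 : rcomp (rcomp (rinv a) a) (rinv a) = rinv a).
  { apply rel_ext; intros x y; unfold rcomp, rinv; split.
    - intros [z [[w [H1 H2]] H3]]. assert (x = z) by (apply (A1 w); auto). subst; auto.
    - intros H. exists x; split; [exists y; auto|auto]. }
  exists (rinv a). split.
  - split; [apply IH_inv; auto|]. split; auto.
  - intros c [Hc [H1 H2]]. symmetry. apply inv_unique; auto.
    all: apply (IH_PB mul rc); auto.
Qed.

Lemma bisimple_part {C : Type} (mul : C -> C -> C) (one : C)
  (assoc : forall x y z, mul x (mul y z) = mul (mul x y) z)
  (lid : forall x, mul one x = x) (rone : forall x, mul x one = x)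
  (rc : forall a x y, mul x a = mul y a -> x = y)
  (lat : lattice_conditions mul) :
  bisimple (in_IH mul) (@rcomp C).
Proof.
  intros f g Hf Hg.
  destruct (IH_NF mul one assoc lid rone rc lat f Hf) as [a [b ->]].
  destruct (IH_NF mul one assoc lid rone rc lat g Hg) as [c [d ->]].
  exists (NF mul c b). split; [|split].
  - apply NF_in with one; auto.
  - exists (NF mul a c), (NF mul c a).
    repeat split; try (apply NF_in with one; auto); rewrite NF_chain; auto.
  - exists (NF mul d b), (NF mul b d).
    repeat split; try (apply NF_in with one; auto); rewrite NF_chain; auto.
Qed.

Lemma idem_sub {C : Type} (e : C -> C -> Prop) :
  PB e -> rcomp e e = e -> forall x y, e x y -> x = y.
Proof.
  intros [E1 E2] He x y Hxy.
  pose proof Hxy as H. rewrite <- He in H. destruct H as [z [H1 H2]].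
  assert (z = y) by eauto. subst z. eauto.
Qed.

Lemma le_sub {C : Type} (mul : C -> C -> C)
  (rc : forall a x y, mul x a = mul y a -> x = y) f m :
  nat_le (in_IH mul) (@rcomp C) f m -> forall x y, f x y -> m x y.
Proof.
  intros [e [[He1 He2] ->]] x y [z [H1 H2]].
  assert (x = z) by (apply (idem_sub e); auto; apply (IH_PB mul rc); auto).
  subst; auto.
Qed.

Lemma NF_le {C : Type} (mul : C -> C -> C) (one : C)
  (assoc : forall x y z, mul x (mul y z) = mul (mul x y) z)
  (lid : forall x, mul one x = x)
  (rc : forall a x y, mul x a = mul y a -> x = y) z c d :
  nat_le (in_IH mul) (@rcomp C) (NF mul (mul z c) (mul z d)) (NF mul c d).
Proof.
  exists (NF mul (mul z c) (mul z c)). split.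
  - split; [apply NF_in with one; auto|]. apply NF_chain; auto.
  - apply rel_ext; intros x y; unfold rcomp, NF; split.
    + intros [k [H1 H2]]. subst. exists (mul k (mul z c)). split.
      * exists k; auto.
      * exists (mul k z). rewrite !assoc; auto.
    + intros [w [[k [H1 H2]] [k' [H3 H4]]]]. subst.
      rewrite assoc in H3. apply rc in H3. subst. exists k. rewrite assoc; auto.
Qed.

Lemma NF_sub {C : Type} (mul : C -> C -> C) (one : C)
  (lid : forall x, mul one x = x) a b c d :
  (forall x y, NF mul a b x y -> NF mul c d x y) -> exists z, a = mul z c /\ b = mul z d.
Proof.
  intros H. apply H. exists one. rewrite !lid; auto.
Qed.

Lemma F_part {C : Type} (mul : C -> C -> C) (one : C)
  (assoc : forall x y z, mul x (mul y z) = mul (mul x y) z)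
  (lid : forall x, mul one x = x) (rone : forall x, mul x one = x)
  (lc : forall a x y, mul a x = mul a y -> x = y)
  (rc : forall a x y, mul x a = mul y a -> x = y)
  (tu : trivial_units mul one)
  (lat : lattice_conditions mul) :
  F_inverse (in_IH mul) (@rcomp C).
Proof.
  intros f Hf.
  destruct (IH_NF mul one assoc lid rone rc lat f Hf) as [a [b ->]].
  destruct (lat a b) as [_ [_ [[g [Hga [Hgb Hg]]] _]]].
  destruct Hga as [c' Hc']. destruct Hgb as [d' Hd'].
  assert (Key : forall z, ldiv mul z c' -> ldiv mul z d' -> z = one).
  { intros z [c1 Hc1] [d1 Hd1].
    destruct (Hg (mul g z)) as [k Hk].
    - exists c1. rewrite <- assoc, Hc1; auto.
    - exists d1. rewrite <- assoc, Hd1; auto.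
    - assert (E : mul z k = one).
      { apply (lc g). rewrite rone, assoc; auto. }
      apply (tu z k); auto.
      apply (lc z). rewrite assoc, E, rone, lid; auto. }
  exists (NF mul c' d'). split; [split|].
  - split; [apply NF_in with one; auto|].
    intros n Hn Hle.
    destruct (IH_NF mul one assoc lid rone rc lat n Hn) as [p [q ->]].
    destruct (NF_sub mul one lid c' d' p q (le_sub mul rc _ _ Hle)) as [z [E1 E2]].
    assert (z = one) by (apply Key; [exists p | exists q]; auto).
    subst z. rewrite lid in E1, E2. subst; auto.
  - subst a b. apply NF_le with one; auto.
  - intros m' [[Hm' Hmax] Hle].
    destruct (IH_NF mul one assoc lid rone rc lat m' Hm') as [c [d ->]].
    destruct (NF_sub mul one lid a b c d (le_sub mul rc _ _ Hle)) as [z [E1 E2]].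
    destruct (Hg z) as [w Hw]; [exists c; auto | exists d; auto |].
    subst a b. rewrite <- Hw, <- assoc in E1, E2.
    apply lc in E1. apply lc in E2. subst c d.
    apply Hmax; [apply NF_in with one; auto|].
    apply NF_le with one; auto.
Qed.

Theorem corollary4p4 (C : Type) (mul : C -> C -> C) (one : C)
  (HC : garside_monoid mul one) :
  inverse_monoid (in_IH mul) (@rcomp C) /\
  bisimple (in_IH mul) (@rcomp C) /\
  F_inverse (in_IH mul) (@rcomp C).
Proof.
  destruct HC as [[assoc [lid rone]] [[lc rc] [tu [lat _]]]].
  split; [|split].
  - apply inverse_part; auto.
  - apply bisimple_part with one; auto.
  - apply F_part with one; auto.
Qed.
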